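(* Let $\mathbb F$ be any field, $n\ge k\ge 1$, and let $\mathcal K\subseteq M_{n\times k}(\mathbb F)$ be a linear variety such that $\det_{n,k}(X)=0$ for every $X\in\mathcal K$. Then $\operatorname{codim}(\mathcal K)\ge k$.
   Context: A linear variety in a finite-dimensional space $W$ is a nonempty set of the form $\mathbf s+V$ with $V\subseteq W$ a linear subspace (uniquely determined); $\operatorname{codim}\mathcal K=\dim W-\dim V$, here $W=M_{n\times k}(\mathbb F)$. Cullis' determinant: for $n\ge k$ and $X\in M_{n\times k}(\mathbb F)$, $\det_{n,k}(X)=\sum_{c}\operatorname{sgn}(c)\det\big(X[c|)\big)$, where $c$ ranges over the $k$-element subsets of $[n]$, $X[c|)$ is the $k\times k$ submatrix formed by the rows indexed by $c$ (in increasing order), and for $c=\{c(1)<\dots<c(k)\}$, $\operatorname{sgn}(c)=(-1)^{\sum_{\alpha=1}^k (c(\alpha)-\alpha)}$. *)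

(* Defs.v *)
From HB Require Import structures.
From mathcomp Require Import all_boot all_order all_algebra.
Set Implicit Arguments. Unset Strict Implicit. Unset Printing Implicit Defensive.
Import GRing.Theory.
Local Open Scope ring_scope.

(* For a k-subset c of 'I_n, enum c lists its elements in increasing order. *)

(* X[c|) : the k x k submatrix of X formed by the rows indexed by c, in
   increasing order (entry (a,j) = X (c(a)) j, c(a) the a-th smallest element). *)
Definition rowsel (F : fieldType) (n k : nat) (X : 'M[F]_(n, k))
    (c : {set 'I_n}) : 'M[F]_k :=
  \matrix_(a < k, j < k) nth 0 [seq X r j | r <- enum c] a.

(* sgn(c) = (-1)^(sum_alpha (c(alpha) - alpha)); the 0-based indices give the
   same differences as the 1-based ones of the paper. *)
Definition cullis_sgn (F : fieldType) (n k : nat) (c : {set 'I_n}) : F :=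
  (-1) ^+ (\sum_(a < k) (nth 0%N [seq val r | r <- enum c] a - a))%N.

Definition cullis_det (F : fieldType) (n k : nat) (X : 'M[F]_(n, k)) : F :=
  \sum_(c : {set 'I_n} | #|c| == k) @cullis_sgn F n k c * \det (rowsel X c).

(* Main.v *)
Require Import Defs.
From HB Require Import structures.
From mathcomp Require Import all_boot all_order all_algebra.
From mathcomp Require Import zify.
From Stdlib Require Import Classical.
Import GRing.Theory.
Local Open Scope ring_scope.

Section Cls.
Variables (F : fieldType) (n : nat).

Definition Pmul {k} (f : 'M[F]_(n, k.+1) -> F) :=
  forall (X : 'M[F]_(n, k.+1)) (M : 'M[F]_k.+1), f (X *m M) = f X * \det M.
Definition Padd {k} (f : 'M[F]_(n, k.+1) -> F) :=
  forall (a b : 'cV[F]_n) (Y : 'M[F]_(n, k)),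
    f (row_mx (a + b) Y) = f (row_mx a Y) + f (row_mx b Y).
Definition cls {k} (f : 'M[F]_(n, k.+1) -> F) := Pmul f /\ Padd f.
Definition nz {k} (f : 'M[F]_(n, k.+1) -> F) := exists X, f X != 0.

Section L.
Variables (k : nat) (f : 'M[F]_(n, k.+1) -> F) (cf : cls f).

Lemma L_scale (c : F) (x : 'cV[F]_n) (Z : 'M[F]_(n, k)) :
  f (row_mx (c *: x) Z) = c * f (row_mx x Z).
Proof.
have E : row_mx x Z *m block_mx (c%:M : 'M_1) 0 0 1%:M = row_mx (c *: x) Z.
  by rewrite mul_row_block !mulmx0 addr0 add0r mulmx1 mul_mx_scalar.
have := (proj1 cf) (row_mx x Z) (block_mx (c%:M : 'M_1) 0 0 1%:M).
rewrite E => ->.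
have D : \det (block_mx (c%:M : 'M_1) 0 0 (1%:M : 'M_k)) = c.
  by rewrite det_ublock det_scalar1 det1 mulr1.
by rewrite D mulrC.
Qed.

Lemma L_zero (Z : 'M[F]_(n, k)) : f (row_mx (0 : 'cV[F]_n) Z) = 0.
Proof. by rewrite -(scale0r (0 : 'cV[F]_n)) L_scale mul0r. Qed.

Lemma L_shear1 (x : 'cV[F]_n) (Z : 'M[F]_(n, k)) (w : 'M[F]_(1, k)) :
  f (row_mx x (Z + x *m w)) = f (row_mx x Z).
Proof.
have E : row_mx x Z *m block_mx (1%:M : 'M_1) w 0 1%:M = row_mx x (Z + x *m w).
  by rewrite mul_row_block !mulmx0 addr0 !mulmx1 addrC.
have := (proj1 cf) (row_mx x Z) (block_mx (1%:M : 'M_1) w 0 1%:M).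
rewrite E => ->.
have D : \det (block_mx (1%:M : 'M_1) w 0 (1%:M : 'M_k)) = 1.
  by rewrite det_ublock !det1 mulr1.
by rewrite D mulr1.
Qed.

Lemma L_shear2 (x : 'cV[F]_n) (Z : 'M[F]_(n, k)) (w : 'M[F]_(k, 1)) :
  f (row_mx (x + Z *m w) Z) = f (row_mx x Z).
Proof.
have E : row_mx x Z *m block_mx (1%:M : 'M_1) 0 w 1%:M = row_mx (x + Z *m w) Z.
  by rewrite mul_row_block !mulmx0 add0r !mulmx1.
have := (proj1 cf) (row_mx x Z) (block_mx (1%:M : 'M_1) 0 w 1%:M).
rewrite E => ->.
have D : \det (block_mx (1%:M : 'M_1) 0 w (1%:M : 'M_k)) = 1.
  by rewrite det_lblock !det1 mulr1.
by rewrite D mulr1.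
Qed.
End L.
Arguments L_scale {k f}. Arguments L_zero {k f}. Arguments L_shear1 {k f}. Arguments L_shear2 {k f}.

Section L2.
Variables (k : nat) (f : 'M[F]_(n, k.+2) -> F) (cf : cls f).

Lemma L_swap (a b : 'cV[F]_n) (Y : 'M[F]_(n, k)) :
  f (row_mx a (row_mx b Y)) = - f (row_mx b (row_mx a Y)).
Proof.
have e1 : row_mx (b + a) Y = row_mx b Y + a *m row_mx (1%:M : 'M_1) (0 : 'M_(1,k)).
  by rewrite mul_mx_row mulmx1 mulmx0 add_row_mx addr0.
have e2 : - b = a + row_mx (b + a) Y *m col_mx (- 1%:M : 'M_1) (0 : 'M_(k,1)).
  by rewrite mul_row_col mulmx0 addr0 mulmxN mulmx1 (addrC b) opprD addrA subrr add0r.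
have e3 : row_mx a Y = row_mx (b + a) Y + (- b) *m row_mx (1%:M : 'M_1) (0 : 'M_(1,k)).
  by rewrite mul_mx_row mulmx1 mulmx0 add_row_mx addr0 addrC addKr.
transitivity (f (row_mx a (row_mx (b + a) Y))); first by rewrite e1 L_shear1.
transitivity (f (row_mx (-b) (row_mx (b + a) Y))); first by rewrite e2 L_shear2.
by rewrite -mulN1r -(L_scale cf) scaleN1r e3 L_shear1.
Qed.

Lemma L_add1 (a b c : 'cV[F]_n) (Y : 'M[F]_(n, k)) :
  f (row_mx a (row_mx (b + c) Y)) = f (row_mx a (row_mx b Y)) + f (row_mx a (row_mx c Y)).
Proof.
apply: etrans (L_swap a (b + c) Y) _.
rewrite (L_swap a b) (L_swap a c) -opprD; congr (- _).
exact: ((proj2 cf) b c (row_mx a Y)).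
Qed.

Lemma slice_cls (v : 'cV[F]_n) : cls (fun Y : 'M[F]_(n, k.+1) => f (row_mx v Y)).
Proof.
split.
  move=> Y M /=.
  have E : row_mx v Y *m block_mx (1%:M : 'M_1) 0 0 M = row_mx v (Y *m M).
    by rewrite mul_row_block !mulmx0 addr0 add0r mulmx1.
  have D : \det (block_mx (1%:M : 'M_1) 0 0 M) = \det M.
    by rewrite det_ublock det1 mul1r.
  by rewrite -E (proj1 cf) D.
by move=> a b Y /=; rewrite L_add1.
Qed.
End L2.
End Cls.
Arguments Pmul {F n k}. Arguments Padd {F n k}. Arguments cls {F n k}. Arguments nz {F n k}.
Arguments L_scale {F n k f}. Arguments L_zero {F n k f}. Arguments L_shear1 {F n k f}.
Arguments L_shear2 {F n k f}. Arguments L_swap {F n k f}. Arguments L_add1 {F n k f}.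
Arguments slice_cls {F n k f}.

Section Claim.
Variables (F : fieldType) (n : nat).

Lemma claim k : forall (f : 'M[F]_(n, k.+1) -> F), cls f -> nz f ->
  forall (t : 'cV[F]_n) (Q : {vspace 'cV[F]_n}), (n <= \dim Q + k)%N ->
  exists q (Y : 'M[F]_(n, k)), q \in Q /\ f (row_mx (t + q) Y) != 0.
Proof.
elim: k => [|k IH] f cf [X0 hX0] t Q hQ; apply: NNPP => hn.
all: have H : forall q (Y : 'M[F]_(n, _)), q \in Q -> f (row_mx (t + q) Y) = 0 by
  move=> q Y hq; case: (eqVneq (f (row_mx (t + q) Y)) 0) => // h; exfalso; apply: hn; by exists q, Y.
all: have HQ : forall q (Y : 'M[F]_(n, _)), q \in Q -> f (row_mx q Y) = 0 by
  move=> q Y hq; have Ht := H 0 Y (mem0v Q); rewrite addr0 in Ht;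
  by have := (proj2 cf) t q Y; rewrite H // Ht add0r => <-.
all: set u := lsubmx (X0 : 'M_(n, 1 + _)).
all: have eX0 : row_mx u (rsubmx (X0 : 'M_(n, 1 + _))) = X0 := hsubmxK (X0 : 'M_(n, 1 + _)).
all: have uQ : u \notin Q by apply/negP => uQ; move: hX0; rewrite -eX0 HQ ?eqxx.
  have /eqP QF : Q == fullv by rewrite eqEdim subvf dimvf /=; move: hQ; rewrite addn0 => h; change (n * 1 <= \dim Q)%N; by rewrite muln1.
  by move: uQ; rewrite QF memvf.
pose g := fun Y : 'M[F]_(n, k.+1) => f (row_mx u Y).
have cg : cls g := slice_cls cf u.
have nzg : nz g by exists (rsubmx (X0 : 'M_(n, 1 + _))); rewrite /g eX0.
have sub : (Q <= Q + <[u]>)%VS := addvSl Q <[u]>.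
have ltQ : (\dim Q < \dim (Q + <[u]>)%VS)%N.
  rewrite (ltn_leqif (dimv_leqif_eq sub)).
  apply/negP => /eqP eQ; move: uQ; rewrite eQ.
  by rewrite (subvP (addvSr Q <[u]>)) // memv_line.
have [q' [Y [hq' hg]]] := IH g cg nzg 0 (Q + <[u]>)%VS ltac:(lia).
move/memv_addP: hq' hg => [q hq [q2 /vlineP [c ->] ->]].
have e : row_mx (0 + (q + c *: u)) Y = row_mx q Y + u *m row_mx (c%:M : 'M_1) (0 : 'M_(1, k)).
  by rewrite add0r mul_mx_row mul_mx_scalar mulmx0 add_row_mx addr0.
by rewrite /g e (L_shear1 cf) (L_swap cf) HQ // oppr0 eqxx.
Qed.
End Claim.
Arguments claim {F n k f}.

Section Core.
Variables (F : fieldType) (n : nat).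

Lemma core k : forall (f : 'M[F]_(n, k.+1) -> F), cls f -> nz f ->
  forall (S : 'M[F]_(n, k.+1)) (V : {vspace 'M[F]_(n, k.+1)}),
  (n * k.+1 < \dim V + k.+1)%N -> exists X, X \in V /\ f (S + X) != 0.
Proof.
elim: k => [|k IH] f cf nzf S V hV.
  have /eqP VF : V == fullv.
    rewrite eqEdim subvf dimvf /=; change (n * 1 <= \dim V)%N; lia.
  case: nzf => X0 h; exists (X0 - S); rewrite VF memvf; split => //.
  by rewrite addrC subrK.
pose p0 : 'Hom('M[F]_(n, 1 + k.+1), 'cV[F]_n) := linfun (lsubmx : 'M_(n, 1 + k.+1) -> 'cV_n).
pose r0 : 'Hom('M[F]_(n, 1 + k.+1), 'M[F]_(n, k.+1)) := linfun (rsubmx : 'M_(n, 1 + k.+1) -> 'M_(n, k.+1)).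
have p0E : forall X, p0 X = lsubmx (X : 'M_(n, 1 + k.+1)) by move=> X; rewrite /p0 /r0 lfunE.
have r0E : forall X, r0 X = rsubmx (X : 'M_(n, 1 + k.+1)) by move=> X; rewrite /p0 /r0 lfunE.
pose K := (V :&: lker p0)%VS.
pose Q := (p0 @: V)%VS.
pose E := (r0 @: K)%VS.
have hdim : (\dim K + \dim Q = \dim V)%N := limg_ker_dim p0 V.
have hE : \dim E = \dim K.
  apply: limg_dim_eq; apply/eqP; rewrite -subv0; apply/subvP => X.
  rewrite !memv_cap !memv_ker p0E r0E => /andP[/andP[_ /eqP hl] /eqP hr].
  by rewrite -(hsubmxK (X : 'M_(n, 1 + k.+1))) hl hr row_mx0 memv0.
have memE : forall Y, (Y \in E) = (row_mx (0 : 'cV[F]_n) Y \in V).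
  move=> Y; apply/idP/idP.
    case/memv_imgP => X; rewrite memv_cap memv_ker p0E r0E => /andP[hX /eqP hl] ->.
    by rewrite -hl hsubmxK.
  move=> hY; apply/memv_imgP; exists (row_mx (0 : 'cV[F]_n) Y); last by rewrite r0E row_mxKr.
  by rewrite memv_cap hY memv_ker p0E row_mxKl eqxx.
have memQ : forall q, q \in Q -> exists2 X, X \in V & lsubmx (X : 'M_(n, 1 + k.+1)) = q.
  by move=> q /memv_imgP [X hX ->]; exists X; rewrite ?p0E.
have dimEb : (\dim E <= n * k.+1)%N.
  by apply: leq_trans (dimvS (subvf E)) _; rewrite dimvf.
have dimQb : (\dim Q <= n)%N.
  apply: leq_trans (dimvS (subvf Q)) _; rewrite dimvf; change (n * 1 <= n)%N; by rewrite muln1.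
have finish : forall (v : 'cV[F]_n) (Xq : 'M[F]_(n, 1 + k.+1)) (e : 'M[F]_(n, k.+1)),
    Xq \in V -> lsubmx (S + Xq : 'M_(n, 1 + k.+1)) = v -> row_mx (0 : 'cV[F]_n) e \in V ->
    f (row_mx v (rsubmx (S + Xq : 'M_(n, 1 + k.+1)) + e)) != 0 ->
    exists X, X \in V /\ f (S + X) != 0.
  move=> v Xq e hXq hl he hf; exists (Xq + row_mx 0 e); split; first by rewrite memvD.
  have -> : S + (Xq + row_mx 0 e) = row_mx v (rsubmx (S + Xq : 'M_(n, 1 + k.+1)) + e) => //.
  by rewrite -hl -[lsubmx _]addr0 -add_row_mx hsubmxK addrA.
rewrite mulnS in hV.
have hK := hdim; rewrite -hE in hK.
case: (ltnP (n * k.+1) (\dim E + k.+1)) => hcase.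
  have hQ : (n <= \dim Q + k.+1)%N by lia.
  have [q [Y1 [hq hY1]]] := claim cf nzf (lsubmx (S : 'M_(n, 1 + k.+1))) Q hQ.
  have [Xq hXq hl] := memQ q hq.
  have [Y' [hY' hg]] := IH _ (slice_cls cf (lsubmx (S : 'M_(n, 1 + k.+1)) + q))
     (ex_intro _ Y1 hY1) (rsubmx (S + Xq : 'M_(n, 1 + k.+1))) E hcase.
  apply: (finish _ Xq Y' hXq _ _ hg); last by rewrite -memE.
  by rewrite linearD -hl.
have /eqP QF : Q == fullv.
  rewrite eqEdim subvf dimvf /=; change (n * 1 <= \dim Q)%N; rewrite muln1; lia.
have [z [j0 hz]] : exists (z : 'cV[F]_n) (j0 : 'I_k.+1), z *m delta_mx 0 j0 \notin E.
  apply: NNPP => hn.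
  have allE : forall Y, Y \in E.
    move=> Y; rewrite (matrix_sum_delta Y); apply: memv_suml => i _; apply: memv_suml => j _.
    rewrite -(mul_delta_mx (0 : 'I_1)) scalemxAl.
    case: (boolP ((Y i j *: delta_mx i 0) *m delta_mx 0 j \in E)) => // h.
    by exfalso; apply: hn; exists (Y i j *: delta_mx i 0), j.
  have : (\dim (fullv : {vspace 'M[F]_(n, k.+1)}) <= \dim E)%N.
    by apply: dimvS; apply/subvP => Y _; apply: allE.
  rewrite dimvf => h; have h' : (n * k.+1 <= \dim E)%N := h; lia.
case: nzf => X0 hX0.
have eX0 := hsubmxK (X0 : 'M_(n, 1 + k.+1)).
set v0 := lsubmx _ in eX0; set Y0 := rsubmx _ in eX0.
have hX0' : f (row_mx v0 Y0) != 0 by rewrite eX0.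
have [v [Yv [hvE hv]]] : exists (v : 'cV[F]_n) (Yv : 'M[F]_(n, k.+1)), v *m delta_mx 0 j0 \notin E /\ f (row_mx v Yv) != 0.
  case: (boolP (v0 *m delta_mx 0 j0 \in E)) => h0; last by exists v0, Y0.
  case: (eqVneq (f (row_mx z Y0)) 0) => hz0; last by exists z, Y0.
  exists (v0 + z), Y0; split.
    apply: contra hz => h; have -> : z *m delta_mx 0 j0 = (v0 + z) *m delta_mx 0 j0 - v0 *m delta_mx 0 j0.
      by rewrite mulmxDl addrC addKr.
    by rewrite memvB.
  by rewrite (proj2 cf) hz0 addr0.
have hq : v - lsubmx (S : 'M_(n, 1 + k.+1)) \in Q by rewrite QF memvf.
have [Xq hXq hl] := memQ _ hq.
pose E' := (E + <[v *m delta_mx ord0 j0]>)%VS.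
have ltE : (\dim E < \dim E')%N.
  rewrite (ltn_leqif (dimv_leqif_eq (addvSl E _))).
  apply/negP => /eqP eE; move: hvE; rewrite eE.
  by rewrite (subvP (addvSr E _)) // memv_line.
have hb : (n * k.+1 < \dim E' + k.+1)%N by lia.
have [Y' [hY' hg]] := IH _ (slice_cls cf v) (ex_intro _ Yv hv)
     (rsubmx (S + Xq : 'M_(n, 1 + k.+1))) E' hb.
move/memv_addP: hY' hg => [e he [y2 /vlineP [c ->] ->]].
move=> hg.
apply: (finish v Xq e hXq _ _ _).
  transitivity (lsubmx (S : 'M_(n, 1 + k.+1)) + lsubmx (Xq : 'M_(n, 1 + k.+1))); first exact: linearD.
  by rewrite hl addrC subrK.
  by rewrite -memE.
move: hg => /=; rewrite addrA scalemxAr.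
by rewrite (L_shear1 cf).
Qed.
End Core.
Arguments core {F n k f}.

Section Cullis.
Variables (F : fieldType) (n : nat).

Definition rsel k {m} (X : 'M[F]_(n, m)) (c : {set 'I_n}) : 'M[F]_(k, m) :=
  \matrix_(a < k, j < m) nth 0 [seq X r j | r <- enum c] a.

Lemma nth_mapD (s : seq 'I_n) (g h : 'I_n -> F) a :
  nth 0 [seq g r + h r | r <- s] a = nth 0 [seq g r | r <- s] a + nth 0 [seq h r | r <- s] a.
Proof. by elim: s a => [|x s IH] [|a] //=; rewrite addr0. Qed.

Lemma nth_mapM (s : seq 'I_n) m p (X : 'M[F]_(n, m)) (M : 'M[F]_(m, p)) a j :
  nth 0 [seq (X *m M) r j | r <- s] a = \sum_l nth 0 [seq X r l | r <- s] a * M l j.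
Proof.
elim: s a => [|x s IH] [|a] /=; first by rewrite big1 // => l _; rewrite mul0r.
- by rewrite big1 // => l _; rewrite mul0r.
- by rewrite mxE.
- exact: IH.
Qed.

Lemma rselM k m p (X : 'M[F]_(n, m)) (M : 'M[F]_(m, p)) c :
  rsel k (X *m M) c = rsel k X c *m M.
Proof.
apply/matrixP => a j; rewrite !mxE nth_mapM; apply: eq_bigr => l _; by rewrite mxE.
Qed.

Lemma rselD k m (X Y : 'M[F]_(n, m)) c : rsel k (X + Y) c = rsel k X c + rsel k Y c.
Proof.
apply/matrixP => a j; rewrite !mxE -nth_mapD; congr nth; apply: eq_map => r; by rewrite mxE.
Qed.

Lemma rsel_row k m (a : 'cV[F]_n) (Y : 'M[F]_(n, m)) c :
  rsel k (row_mx a Y) c = row_mx (rsel k a c) (rsel k Y c).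
Proof.
apply/matrixP => i j; case: (splitP j) => j' hj.
  have -> : j = lshift m j' by apply: val_inj.
  rewrite row_mxEl !mxE; congr nth; apply: eq_map => r; by rewrite row_mxEl.
have -> : j = rshift 1 j' by apply: val_inj.
rewrite row_mxEr !mxE; congr nth; apply: eq_map => r; by rewrite row_mxEr.
Qed.

Lemma col'0_row p m (x : 'cV[F]_m) (Y : 'M[F]_(m, p)) :
  col' ord0 (row_mx x Y : 'M_(m, p.+1)) = Y.
Proof.
apply/matrixP => i l; rewrite mxE.
have -> : lift ord0 l = rshift 1 l by apply: val_inj.
exact: row_mxEr.
Qed.

Lemma row_ent0 p m (x : 'cV[F]_m) (Y : 'M[F]_(m, p)) i :
  (row_mx x Y : 'M_(m, p.+1)) i ord0 = x i 0.
Proof.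
have -> : (ord0 : 'I_p.+1) = lshift p (0 : 'I_1) by apply: val_inj.
exact: row_mxEl.
Qed.

Lemma det_add0 p (a b : 'cV[F]_(p.+1)) (Y : 'M[F]_(p.+1, p)) :
  \det (row_mx (a + b) Y : 'M_(p.+1)) = \det (row_mx a Y : 'M_(p.+1)) + \det (row_mx b Y : 'M_(p.+1)).
Proof.
rewrite !(expand_det_col _ ord0) -big_split; apply: eq_bigr => i _ /=.
rewrite !row_ent0 /cofactor !col'0_row mxE mulrDl //.
Qed.
End Cullis.
Arguments rsel {F n} k {m}. Arguments rselM {F n}. Arguments rselD {F n}. Arguments rsel_row {F n}. Arguments det_add0 {F}.

Section Cullis2.
Variables (F : fieldType) (n k : nat).

Lemma cullis_cls : cls (@cullis_det F n k.+1).
Proof.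
split.
  move=> X M; rewrite /cullis_det big_distrl; apply: eq_bigr => c _.
  have e : rowsel (X *m M) c = rowsel X c *m M := rselM k.+1 _ _ X M c.
  by rewrite e det_mulmx mulrA.
move=> a b Y; rewrite /cullis_det -big_split; apply: eq_bigr => c _ /=.
have e : forall x : 'cV[F]_n, rowsel (row_mx x Y : 'M_(n, k.+1)) c =
    (row_mx (rsel k.+1 x c) (rsel k.+1 Y c) : 'M_(k.+1)) := fun x => rsel_row k.+1 _ x Y c.
by rewrite !e rselD det_add0 mulrDr.
Qed.
End Cullis2.

Section Cullis3.
Variables (F : fieldType) (n k : nat) (hkn : (k.+1 <= n)%N).

Let c0 : {set 'I_n} := [set i : 'I_n | (i < k.+1)%N].

Lemma enum_c0 : [seq val i | i <- enum c0] = iota 0 k.+1.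
Proof.
rewrite -(filter_iota_ltn 0 hkn) -val_enum_ord filter_map enumT /enum_mem.
by congr map; apply: eq_filter => i /=; rewrite inE.
Qed.

Lemma card_c0 : #|c0| = k.+1.
Proof. by rewrite cardE -(size_map val) enum_c0 size_iota. Qed.

Definition Xone : 'M[F]_(n, k.+1) := \matrix_(i < n, j < k.+1) ((i : nat) == j)%:R.

Lemma rsel_Xone (c : {set 'I_n}) (j a : 'I_k.+1) (hc : #|c| = k.+1) :
  rowsel Xone c a j = ((nth 0%N [seq val i | i <- enum c] a == (j : nat)))%:R.
Proof.
rewrite mxE.
have -> : [seq Xone r j | r <- enum c] = [seq ((m == (j : nat)))%:R | m <- [seq val i | i <- enum c]].
  by rewrite -map_comp; apply: eq_map => r /=; rewrite mxE.
have ha : (a < size (enum c))%N by rewrite -cardE hc.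
by rewrite (nth_map 0%N) ?size_map.
Qed.

Lemma cullis_Xone : cullis_det Xone = 1.
Proof.
rewrite /cullis_det (bigD1 c0) /=; last by rewrite card_c0.
rewrite big1 ?addr0.
  have -> : rowsel Xone c0 = 1%:M.
    by apply/matrixP => a j; rewrite rsel_Xone ?card_c0 // enum_c0 nth_iota // mxE.
  rewrite det1 mulr1 /cullis_sgn enum_c0 big1 ?expr0 // => a _.
  by rewrite nth_iota // add0n subnn.
move=> c /andP [/eqP hc hne].
have [r rc rk] : exists2 r : 'I_n, r \in c & (k.+1 <= r)%N.
  apply: NNPP => hn; move: hne; rewrite eqEcard card_c0 hc leqnn andbT.
  apply/negP; rewrite negbK; apply/subsetP => r rc; rewrite inE.
  by rewrite ltnNge; apply/negP => h; apply: hn; exists r.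
have ha : (index r (enum c) < k.+1)%N by rewrite -hc cardE index_mem mem_enum.
rewrite (expand_det_row _ (Ordinal ha)) big1 ?mulr0 // => j _.
rewrite rsel_Xone //=.
rewrite (nth_map r) ?index_mem ?mem_enum // nth_index ?mem_enum //.
have : (j < r)%N by apply: leq_trans (ltn_ord j) rk.
by case: eqP => [-> |]; [rewrite ltnn | rewrite mul0r].
Qed.

Lemma cullis_nz : nz (@cullis_det F n k.+1).
Proof. by exists Xone; rewrite cullis_Xone oner_neq0. Qed.
End Cullis3.

Theorem mainTheorem2 (F : fieldType) (n k : nat) (hk : (1 <= k)%N) (hkn : (k <= n)%N)
    (s : 'M[F]_(n, k)) (V : {vspace 'M[F]_(n, k)})
    (hK : forall X : 'M[F]_(n, k), X \in V -> cullis_det (s + X) = 0) :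
  (k <= \dim (fullv : {vspace 'M[F]_(n, k)}) - \dim V)%N.
Proof.
case: k hk hkn s V hK => [//|k] _ hkn s V hK.
rewrite leqNgt; apply/negP => hlt.
have hVb : (\dim V <= \dim (fullv : {vspace 'M[F]_(n, k.+1)}))%N by apply: dimvS; apply: subvf.
move: hlt hVb; rewrite dimvf => hlt hVb.
have hd : dim 'M[F]_(n, k.+1) = (n * k.+1)%N by [].
rewrite hd in hlt hVb.
have hV : (n * k.+1 < \dim V + k.+1)%N by lia.
have [X [hX hne]] := core (@cullis_cls F n k) (@cullis_nz F n k hkn) s V hV.
by move: hne; rewrite hK ?eqxx.
Qed.
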